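(* If the NNF DAG of $F$ (equivalently $\hat F(\mathbf{X},\neg\mathbf{X},\mathbf{Y})$) is in weak decomposable NNF (wDNNF), then $\delta_i=\Delta_i$ and $\gamma_i=\Gamma_i$ (as Boolean functions of $\mathbf{X}_{i+1}^n,\mathbf{Y}$) for every $i\in\{1,\ldots,n\}$.
   Context: $\mathbf{X}=(x_1,\ldots,x_n)$ are outputs and $\mathbf{Y}=(y_1,\ldots,y_m)$ inputs; $\mathbf{X}_i^j=(x_i,\ldots,x_j)$. $\Delta_i\equiv\neg\exists\mathbf{X}_1^{i-1}F(\mathbf{X}_1^{i-1},0,\mathbf{X}_{i+1}^n,\mathbf{Y})$ and $\Gamma_i\equiv\neg\exists\mathbf{X}_1^{i-1}F(\mathbf{X}_1^{i-1},1,\mathbf{X}_{i+1}^n,\mathbf{Y})$ (the constant occupies the position of $x_i$). An NNF formula uses only $\wedge,\vee$ and negations applied to variables, represented as a rooted DAG with $\wedge/\vee$ internal nodes and literal leaves. For an internal node representing subformula $\alpha$, $\mathrm{lits}(\alpha)$ is the set of literals labeling leaves having a path to that node. The NNF DAG is in wDNNF if for every $\wedge$-node representing $\alpha=\alpha_1\wedge\cdots\wedge\alpha_k$ there is no literal $l$ and distinct $p,q\in\{1,\ldots,k\}$ with $l\in\mathrm{lits}(\alpha_p)$ and $\neg l\in\mathrm{lits}(\alpha_q)$. $\hat F(\mathbf{X},\overline{\mathbf{X}},\mathbf{Y})$ is obtained from the NNF DAG of $F$ by replacing each leaf $\neg x_i$ ($x_i\in\mathbf{X}$) by a fresh variable $\overline{x_i}$.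 For length-$i$ bit-vectors $\mathbf{b},\mathbf{c}$, $\hat F(\mathbf{b},\mathbf{X}_{i+1}^n,\mathbf{c},\neg\mathbf{X}_{i+1}^n,\mathbf{Y})$ sets $(x_1,\ldots,x_i):=\mathbf{b}$, $(\overline{x_1},\ldots,\overline{x_i}):=\mathbf{c}$ and $\overline{x_k}:=\neg x_k$ for $k>i$. Define $\delta_i=\neg\hat F(\mathbf{1}^{i-1}0,\mathbf{X}_{i+1}^n,\mathbf{1}^i,\neg\mathbf{X}_{i+1}^n,\mathbf{Y})$ and $\gamma_i=\neg\hat F(\mathbf{1}^{i},\mathbf{X}_{i+1}^n,\mathbf{1}^{i-1}0,\neg\mathbf{X}_{i+1}^n,\mathbf{Y})$, where $\mathbf{1}^{i-1}0$ is $i-1$ ones followed by a $0$. *)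

(* Defs.v *)
From mathcomp Require Import all_boot.
Set Implicit Arguments. Unset Strict Implicit. Unset Printing Implicit Defensive.

(* Variables of F: outputs X = x_0..x_{n-1} (inl) and inputs Y = y_0..y_{m-1} (inr).
   Indices are 0-based: paper's x_{i} is our x_{i-1}. *)
Definition var (n m : nat) := ('I_n + 'I_m)%type.

(* NNF formula: a literal leaf (b = true : positive literal v, b = false : ~ v),
   or a k-ary AND / OR node. A DAG is represented by its tree unfolding, which
   has the same semantics and the same lits(.) at every node. *)
Inductive nnf (V : Type) : Type :=
| Lit of bool & V
| And of seq (nnf V)
| Or of seq (nnf V).
Arguments And {V} _.
Arguments Or {V} _.

Fixpoint lits (V : Type) (f : nnf V) : seq (bool * V) :=
  match f with
  | Lit b v => [:: (b, v)]
  | And fs => flatten (map (@lits V) fs)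
  | Or fs => flatten (map (@lits V) fs)
  end.

Definition negl (V : Type) (l : bool * V) : bool * V := (~~ l.1, l.2).

Fixpoint wDNNF (V : eqType) (f : nnf V) : bool :=
  match f with
  | Lit _ _ => true
  | Or fs => all (@wDNNF V) fs
  | And fs =>
      all (@wDNNF V) fs &&
      all (fun p => all (fun q =>
             (p != q) ==>
             all (fun l => negl l \notin lits (nth (And [::]) fs q))
                 (lits (nth (And [::]) fs p)))
           (iota 0 (size fs))) (iota 0 (size fs))
  end.

(* Evaluation of F-hat(X, Xbar, Y): positive leaf x_k reads ax k, the leaf ~x_k
   (replaced by fresh xbar_k) reads axb k; Y literals are evaluated normally. *)
Fixpoint eval_hat (n m : nat) (ax axb : 'I_n -> bool) (ay : 'I_m -> bool)
    (f : nnf (var n m)) : bool :=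
  match f with
  | Lit b (inl k) => if b then ax k else axb k
  | Lit b (inr j) => if b then ay j else ~~ ay j
  | And fs => all (eval_hat ax axb ay) fs
  | Or fs => has (eval_hat ax axb ay) fs
  end.

Definition eval (n m : nat) (ax : 'I_n -> bool) (ay : 'I_m -> bool)
    (f : nnf (var n m)) : bool :=
  eval_hat ax (fun k => ~~ ax k) ay f.

(* As functions of the full assignment; they only depend on ax k for k > i. *)
Definition DeltaGamma (n m : nat) (f : nnf (var n m)) (c : bool) (i : 'I_n)
    (ax : 'I_n -> bool) (ay : 'I_m -> bool) : bool :=
  ~~ [exists b : {ffun 'I_n -> bool},
        eval (fun k => if (k < i)%N then b k else if k == i then c else ax k) ay f].

Definition Delta n m (f : nnf (var n m)) i ax ay := DeltaGamma f false i ax ay.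
Definition Gamma n m (f : nnf (var n m)) i ax ay := DeltaGamma f true i ax ay.

Definition delta (n m : nat) (f : nnf (var n m)) (i : 'I_n)
    (ax : 'I_n -> bool) (ay : 'I_m -> bool) : bool :=
  ~~ eval_hat (fun k => if (k < i)%N then true else if k == i then false else ax k)
              (fun k => if (k <= i)%N then true else ~~ ax k) ay f.

Definition gamma (n m : nat) (f : nnf (var n m)) (i : 'I_n)
    (ax : 'I_n -> bool) (ay : 'I_m -> bool) : bool :=
  ~~ eval_hat (fun k => if (k <= i)%N then true else ax k)
              (fun k => if (k < i)%N then true else if k == i then false else ~~ ax k) ay f.

(* Main.v *)
Require Import Defs.
From mathcomp Require Import all_boot.
From Stdlib Require List.
Set Implicit Arguments. Unset Strict Implicit.

Section Ind.
Variable V : Type.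
Variable P : nnf V -> Prop.
Hypothesis HL : forall b v, P (Lit b v).
Hypothesis HA : forall fs, foldr (fun g acc => P g /\ acc) True fs -> P (And fs).
Hypothesis HO : forall fs, foldr (fun g acc => P g /\ acc) True fs -> P (Or fs).
Fixpoint nnf_ind2 (f : nnf V) : P f :=
  match f with
  | Lit b v => HL b v
  | And fs => @HA fs ((fix go (l : seq (nnf V)) : foldr (fun g acc => P g /\ acc) True l :=
                     match l return foldr (fun g acc => P g /\ acc) True l with
                     | [::] => I
                     | g :: l' => conj (nnf_ind2 g) (go l') end) fs)
  | Or fs => @HO fs ((fix go (l : seq (nnf V)) : foldr (fun g acc => P g /\ acc) True l :=
                     match l return foldr (fun g acc => P g /\ acc) True l with
                     | [::] => I
                     | g :: l' => conj (nnf_ind2 g) (go l') end) fs)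
  end.
End Ind.

Lemma foldrP (V : Type) (P : nnf V -> Prop) (fs : seq (nnf V)) (g : nnf V) :
  foldr (fun g acc => P g /\ acc) True fs -> List.In g fs -> P g.
Proof.
elim: fs => //= h fs IH [Ph Pfs] [<-//|]; exact: IH.
Qed.

Lemma lits_sub (V : eqType) (fs : seq (nnf V)) (g : nnf V) l :
  List.In g fs -> l \in lits g -> l \in flatten (map (@lits V) fs).
Proof.
elim: fs => //= h fs IH; rewrite mem_cat => [[->->//|gin lin]].
by rewrite IH ?orbT.
Qed.

Lemma allIn T (p : pred T) s : reflect (forall x, List.In x s -> p x) (all p s).
Proof.
elim: s => /= [|x s IH]; first by constructor.
case px: (p x) => /=; last by constructor => H; rewrite H in px; auto.
case: IH => H; constructor; first by move=> y [<-|]; auto.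
by move=> H'; apply: H => y yin; apply: H'; auto.
Qed.

Lemma hasIn T (p : pred T) s : reflect (exists2 x, List.In x s & p x) (has p s).
Proof.
elim: s => /= [|x s IH]; first by constructor => [[]].
case px: (p x) => /=; first by constructor; exists x; auto.
case: IH => H; constructor; first by case: H => y ? ?; exists y; auto.
by case=> y [<-|yin] py; [rewrite py in px| apply: H; exists y].
Qed.

Lemma InNth T (d : T) s x : List.In x s -> exists2 j, j < size s & nth d s j = x.
Proof.
elim: s => //= y s IH [<-|]; first by exists 0.
by case/IH => j ? ?; exists j.+1.
Qed.

Section Main.
Variables (n m : nat) (ay : 'I_m -> bool).

Lemma mono (f : nnf (var n m)) : forall ax axb ax' axb' : 'I_n -> bool,
  (forall k, (true, inl k) \in lits f -> ax k -> ax' k) ->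
  (forall k, (false, inl k) \in lits f -> axb k -> axb' k) ->
  eval_hat ax axb ay f -> eval_hat ax' axb' ay f.
Proof.
elim/nnf_ind2: f.
- move=> b [k|j] ax axb ax' axb' H1 H2 /=; last by [].
  by case: b H1 H2 => H1 H2 /=; [apply: H1|apply: H2]; rewrite mem_seq1.
- move=> fs IH ax axb ax' axb' H1 H2 /= /allIn Hall; apply/allIn => g gin.
  have := foldrP IH gin; move=> /(_ ax axb ax' axb'); apply; last exact: Hall g gin.
  + by move=> k lin; apply: H1; apply: (lits_sub gin).
  + by move=> k lin; apply: H2; apply: (lits_sub gin).
- move=> fs IH ax axb ax' axb' H1 H2 /= /hasIn [g gin Hg]; apply/hasIn; exists g => //.
  have := foldrP IH gin; move=> /(_ ax axb ax' axb'); apply; last exact: Hg.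
  + by move=> k lin; apply: H1; apply: (lits_sub gin).
  + by move=> k lin; apply: H2; apply: (lits_sub gin).
Qed.

Definition cons_ (ax axb b : 'I_n -> bool) :=
  (forall k, b k -> ax k) /\ (forall k, ~~ b k -> axb k).

Definition PW (fs : seq (nnf (var n m))) := forall p q, p < size fs -> q < size fs ->
  p != q -> forall l, l \in lits (nth (And [::]) fs p) ->
  negl l \notin lits (nth (And [::]) fs q).

Lemma and_comb ax axb (fs : seq (nnf (var n m))) :
  (forall k, ax k || axb k) -> PW fs ->
  foldr (fun g acc => (exists b, cons_ ax axb b /\ eval_hat b (fun k => ~~ b k) ay g) /\ acc)
    True fs ->
  exists b, cons_ ax axb b /\ all (eval_hat b (fun k => ~~ b k) ay) fs.
Proof.
move=> Hax; elim: fs => [|g0 fs IH] PWf /=.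
  move=> _; exists ax; split => //; split => // k; by move: (Hax k); case: (ax k).
move=> [[b0 [[c01 c02] E0]] Hfs].
have PWt : PW fs.
  by move=> p q Hp Hq Hpq; apply: (PWf p.+1 q.+1).
have [b' [[c1 c2] E']] := IH PWt Hfs.
have cross1 : forall g', List.In g' fs -> forall l, l \in lits g0 -> negl l \notin lits g'.
  move=> g' /(InNth (And [::])) [j Hj <-] l lin.
  by apply: (PWf 0 j.+1) => //.
have cross2 : forall g', List.In g' fs -> forall l, l \in lits g' -> negl l \notin lits g0.
  move=> g' /(InNth (And [::])) [j Hj <-] l lin.
  by apply: (PWf j.+1 0) => //.
pose b k := if ((true, inl k) \in lits g0) && b0 k then true
            else if ((false, inl k) \in lits g0) && ~~ b0 k then false else b' k.
exists b; split.
  split => k; rewrite /b.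
  - case: ifP => [/andP[_ /c01]//|_]; case: ifP => // _; exact: c1.
  - case: ifP => // _; case: ifP => [/andP[_ /c02]//|_]; exact: c2.
apply/andP; split.
  apply: (mono _ _ E0) => k lin; rewrite /b lin /=.
  - by move=> ->.
  - by move=> Hb; rewrite (negbTE Hb) andbF.
apply/allIn => g' gin; move/allIn: E' => /(_ g' gin) E'.
apply: (mono _ _ E') => k lin; rewrite /b.
- move=> Hb'; case: ifP => // _; case: ifP => //.
  move=> /andP[lin0 _]; have := cross2 g' gin _ lin; by rewrite /negl /= lin0.
- move=> Hb'; case: ifP.
    move=> /andP[lin0 _]; have := cross1 g' gin _ lin0; by rewrite /negl /= lin.
  by move=> _; case: ifP.
Qed.

Lemma sat (f : nnf (var n m)) : wDNNF f -> forall ax axb, (forall k, ax k || axb k) ->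
  eval_hat ax axb ay f ->
  exists b, cons_ ax axb b /\ eval_hat b (fun k => ~~ b k) ay f.
Proof.
elim/nnf_ind2: f.
- move=> bb [k|j] _ ax axb Hax /= E.
  + exists (fun j => if j == k then bb else ax j); split; last by rewrite eqxx; case: bb {E}.
    split => j; case: eqP => [->|_]; case: bb E => //= _; move: (Hax j); by case: (ax j).
  + exists ax; split => //; split => // k; move: (Hax k); by case: (ax k).
- move=> fs IH /= /andP[/allIn Wall Wpw] ax axb Hax /allIn E.
  apply: and_comb => //.
    move=> p q Hp Hq Hpq l lin.
    have := allP Wpw p; rewrite mem_iota add0n Hp => /(_ isT) /allP /(_ q).
    rewrite mem_iota add0n Hq => /(_ isT); rewrite Hpq /= => /allP; exact.
  elim: fs IH Wall E {Wpw} => //= g fs IHl [IHg IHfs] Wall E; split.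
    by apply: IHg; [apply: Wall; by left| |apply: E; by left].
  apply: IHl => // [g' gin|g' gin]; [apply: Wall|apply: E]; by right.
- move=> fs IH /= /allIn Wall ax axb Hax /hasIn [g gin Eg].
  have [b [cb Eb]] := foldrP IH gin (Wall g gin) ax axb Hax Eg.
  by exists b; split => //; apply/hasIn; exists g.
Qed.

End Main.

Lemma ordgt n (k i : 'I_n) : (i <= k)%N -> k != i -> (i < k)%N.
Proof. by rewrite ltn_neqAle eq_sym => -> ->. Qed.

Theorem theorem2 (n m : nat) (f : nnf (var n m)) :
  wDNNF f ->
  forall (i : 'I_n) (ax : 'I_n -> bool) (ay : 'I_m -> bool),
    delta f i ax ay = Delta f i ax ay /\ gamma f i ax ay = Gamma f i ax ay.
Proof.
move=> W i ax ay; rewrite /delta /Delta /gamma /Gamma /DeltaGamma; split; congr negb.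
- apply/idP/existsP.
  + move=> E; have [|b [[c1 c2] Eb]] := sat W _ E.
      move=> k; case: (ltnP k i) => [//|H]; case: (eqVneq k i) => [->|Hne].
        by rewrite leqnn orbT.
      by rewrite leqNgt (ordgt H Hne) /=; case: (ax k).
    exists (finfun b); rewrite /eval; apply: (mono _ _ Eb) => k _; rewrite ffunE;
      case: (ltnP k i) => [//|H]; case: (eqVneq k i) => [->|Hne];
      try by rewrite ?ltnn ?eqxx.
    * by move=> /c1; rewrite ltnn eqxx.
    * by move=> /c1; rewrite ltnNge H /= (negbTE Hne).
    * by move=> /c2; rewrite leqNgt (ordgt H Hne).
  + move=> [bb E]; apply: (mono _ _ E) => k _.
    * by case: (ltnP k i) => // _; case: eqP.
    * case: (ltnP k i) => [H|H]; first by rewrite ltnW.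
      case: (eqVneq k i) => [->|Hne]; first by rewrite leqnn.
      by rewrite leqNgt (ordgt H Hne).
- apply/idP/existsP.
  + move=> E; have [|b [[c1 c2] Eb]] := sat W _ E.
      move=> k; case: (ltnP k i) => [H|H]; first by rewrite ltnW.
      case: (eqVneq k i) => [->|Hne]; first by rewrite leqnn.
      by rewrite leqNgt (ordgt H Hne) /=; case: (ax k).
    exists (finfun b); rewrite /eval; apply: (mono _ _ Eb) => k _; rewrite ffunE;
      case: (ltnP k i) => [//|H]; case: (eqVneq k i) => [->|Hne];
      try by rewrite ?ltnn ?eqxx.
    * by move=> /c1; rewrite leqNgt (ordgt H Hne).
    * by move=> /c2; rewrite ltnn eqxx.
    * by move=> /c2; rewrite ltnNge H /= (negbTE Hne).
  + move=> [bb E]; apply: (mono _ _ E) => k _.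
    * case: (ltnP k i) => [H|H]; first by rewrite ltnW.
      case: (eqVneq k i) => [->|Hne]; first by rewrite leqnn.
      by rewrite leqNgt (ordgt H Hne).
    * by case: (ltnP k i) => // _; case: eqP.
Qed.
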